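(* Let $\tau:\mathcal{D}_{\mathbf{V}_L}\to\mathcal{D}_{\mathbf{V}_H}$ be a constructive abstraction function w.r.t. clusterings $\mathbb{C}$ and $\mathbb{D}$. If $\mathbf{X}_L$ is a union of clusters in $\mathbb{C}$ (i.e., $\mathbf{X}_L=\bigcup_{\mathbf{C}_i\in\mathbb{C}'}\mathbf{C}_i$ for some $\mathbb{C}'\subseteq\mathbb{C}$), then for every $\mathbf{x}_L\in\mathcal{D}_{\mathbf{X}_L}$, $\omega_\tau(\mathbf{X}_L\leftarrow\mathbf{x}_L)$ exists and equals $\tau(\mathbf{X}_L)\leftarrow\tau(\mathbf{x}_L)$.
   Context: $\mathcal{D}_{\mathbf{X}}$ denotes the (Cartesian product) domain of a set of variables $\mathbf{X}$. An intervariable clustering of $\mathbf{V}_L$ is a set $\mathbb{C}=\{\mathbf{C}_1,\dots,\mathbf{C}_n\}$ forming a partition of a subset of $\mathbf{V}_L$; an intravariable clustering is $\mathbb{D}=\{\mathbb{D}_{\mathbf{C}_i}\}$ where $\mathbb{D}_{\mathbf{C}_i}=\{\mathcal{D}^1_{\mathbf{C}_i},\dots,\mathcal{D}^{m_i}_{\mathbf{C}_i}\}$ is a partition of $\mathcal{D}_{\mathbf{C}_i}$. A constructive abstraction function w.r.t. $\mathbb{C},\mathbb{D}$: $\mathbf{V}_H=\{V_{H,1},\dots,V_{H,n}\}$ in bijection with $\mathbb{C}$, $\mathcal{D}_{V_{H,i}}=\{v^1_{H,i},\dots,v^{m_i}_{H,i}\}$ in bijection with $\mathbb{D}_{\mathbf{C}_i}$,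 and $\tau(\mathbf{v}_L)=(\tau_{\mathbf{C}_i}(\mathbf{c}_i):\mathbf{C}_i\in\mathbb{C})$ with $\tau_{\mathbf{C}_i}(\mathbf{c}_i)=v^j_{H,i}$ iff $\mathbf{c}_i\in\mathcal{D}^j_{\mathbf{C}_i}$; for a union of clusters $\mathbf{W}_L$, $\tau(\mathbf{w}_L)=(\tau_{\mathbf{C}_i}(\mathbf{c}_i):\mathbf{C}_i\subseteq\mathbf{W}_L)$ and $\tau(\mathbf{W}_L)=\{V_{H,i}:\mathbf{C}_i\subseteq\mathbf{W}_L\}$. For a set of variables $\mathbf{V}$ and a value $\mathbf{x}$ of $\mathbf{X}\subseteq\mathbf{V}$, $\mathrm{Rst}(\mathbf{V},\mathbf{x})=\{\mathbf{v}\in\mathcal{D}_{\mathbf{V}}:\mathbf{v}\text{ is consistent with }\mathbf{x}\}$; for a set $\mathbf{T}\subseteq\mathcal{D}_{\mathbf{V}_L}$, $\tau(\mathbf{T})=\{\tau(\mathbf{v}):\mathbf{v}\in\mathbf{T}\}$. The map $\omega_\tau$ is defined by $\omega_\tau(\mathbf{X}_L\leftarrow\mathbf{x}_L)=(\mathbf{X}_H\leftarrow\mathbf{x}_H)$ whenever $\tau(\mathrm{Rst}(\mathbf{V}_L,\mathbf{x}_L))=\mathrm{Rst}(\mathbf{V}_H,\mathbf{x}_H)$ (it exists when such an intervention $\mathbf{X}_H\leftarrow\mathbf{x}_H$ exists). *)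

(* Defs.v *)
Set Implicit Arguments.

(* D_X : the Cartesian product domain of a set of variables X (X given as a
   predicate on the variable type V, D v the domain of variable v). *)
Definition dom (V : Type) (D : V -> Type) (X : V -> Prop) : Type :=
  forall v : V, X v -> D v.

Definition full (V : Type) (D : V -> Type) : Type := forall v : V, D v.

Definition Rst (V : Type) (D : V -> Type) (X : V -> Prop) (x : dom D X)
  : full D -> Prop :=
  fun w => forall (v : V) (h : X v), w v = x v h.

Definition restrict_full (V : Type) (D : V -> Type) (w : full D) (Y : V -> Prop)
  : dom D Y := fun v _ => w v.

Definition intervariable_clustering (VL I : Type) (C : I -> VL -> Prop) : Prop :=
  (forall i, exists v, C i v) /\
  (forall i j v, C i v -> C j v -> i = j).

(* The block index type B i is the high-level domain of V_{H,i}. *)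
Definition intravariable_clustering (VL I : Type) (D : VL -> Type)
  (C : I -> VL -> Prop) (B : I -> Type)
  (blk : forall i : I, B i -> dom D (C i) -> Prop) : Prop :=
  forall i : I,
    (forall j : B i, exists c, blk i j c) /\
    (forall (j k : B i) c, blk i j c -> blk i k c -> j = k) /\
    (forall c, exists j : B i, blk i j c).

Definition constructive_tauC (VL I : Type) (D : VL -> Type)
  (C : I -> VL -> Prop) (B : I -> Type)
  (blk : forall i : I, B i -> dom D (C i) -> Prop)
  (tauC : forall i : I, dom D (C i) -> B i) : Prop :=
  forall i c j, tauC i c = j <-> blk i j c.

Definition tau (VL I : Type) (D : VL -> Type) (C : I -> VL -> Prop)
  (B : I -> Type) (tauC : forall i : I, dom D (C i) -> B i)
  (w : full D) : full B :=
  fun i => tauC i (restrict_full w (C i)).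

Definition tau_vars (VL I : Type) (C : I -> VL -> Prop) (W : VL -> Prop)
  : I -> Prop := fun i => forall v, C i v -> W v.

Definition tau_val (VL I : Type) (D : VL -> Type) (C : I -> VL -> Prop)
  (B : I -> Type) (tauC : forall i : I, dom D (C i) -> B i)
  (W : VL -> Prop) (w : dom D W) : dom B (tau_vars C W) :=
  fun i (h : tau_vars C W i) => tauC i (fun v hv => w v (h v hv)).

(* omega_tau(X_L <- x_L) = (X_H <- x_H) holds iff
   tau(Rst(V_L, x_L)) = Rst(V_H, x_H) (equality of sets of assignments). *)
Definition omega_tau_is (VL I : Type) (D : VL -> Type) (B : I -> Type)
  (t : full D -> full B)
  (XL : VL -> Prop) (xL : dom D XL) (XH : I -> Prop) (xH : dom B XH) : Prop :=
  forall h : full B,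
    (exists w : full D, Rst xL w /\ t w = h) <-> Rst xH h.

(* Main.v *)
Require Import Defs.
From Stdlib Require Import Classical ClassicalEpsilon FunctionalExtensionality ProofIrrelevance.

Theorem lemma3 (VL I : Type) (D : VL -> Type) (C : I -> VL -> Prop)
  (B : I -> Type) (blk : forall i : I, B i -> dom D (C i) -> Prop)
  (tauC : forall i : I, dom D (C i) -> B i)
  (HD : forall v : VL, inhabited (D v))
  (HC : intervariable_clustering C)
  (HB : @intravariable_clustering VL I D C B blk)
  (Htau : @constructive_tauC VL I D C B blk tauC)
  (XL : VL -> Prop)
  (Hunion : exists C' : I -> Prop, forall v, XL v <-> exists i, C' i /\ C i v)
  (xL : dom D XL) :
  @omega_tau_is VL I D B (@tau VL I D C B tauC) XL xL
    (tau_vars C XL) (@tau_val VL I D C B tauC XL xL).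
Proof.
  destruct HC as [_ Hdisj].
  destruct Hunion as [C' HU].
  intro h; split.
  - intros [w [Hw Hh]] i hi. subst h. unfold tau, tau_val, restrict_full.
    f_equal. apply functional_extensionality_dep; intro v.
    apply functional_extensionality_dep; intro hv. apply Hw.
  - intros Hh.
    assert (dflt : forall v, D v).
    { intro v. apply (proj1_sig (constructive_indefinite_description (fun _ : D v => True)
        (let (x) := HD v in ex_intro _ x Logic.I))). }
    pose (c := fun i => proj1_sig (constructive_indefinite_description _
                 (proj1 (HB i) (h i)))).
    assert (Hc : forall i, blk i (h i) (c i)).
    { intro i. unfold c. exact (proj2_sig (constructive_indefinite_description _ _)). }
    pose (w := fun v : VL =>
      match excluded_middle_informative (XL v) with
      | left hx => xL v hx
      | right _ =>
        match excluded_middle_informative (exists i, C i v) with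
        | left he => let (j, hj) := constructive_indefinite_description _ he in c j v hj
        | right _ => dflt v
        end
      end : D v).
    exists w. split.
    + intros v hv. unfold w.
      destruct (excluded_middle_informative (XL v)) as [hx|hx]; [|contradiction].
      f_equal. apply proof_irrelevance.
    + apply functional_extensionality_dep; intro i.
      unfold tau, restrict_full.
      destruct (classic (tau_vars C XL i)) as [hs|hs].
      * rewrite (Hh i hs). unfold tau_val. f_equal.
        apply functional_extensionality_dep; intro v.
        apply functional_extensionality_dep; intro hv.
        unfold w. destruct (excluded_middle_informative (XL v)) as [hx|hx].
        -- f_equal. apply proof_irrelevance.
        -- exfalso. exact (hx (hs v hv)).
      * assert (Hnx : forall v, C i v -> ~ XL v).
        { intros v hv hx. apply hs. intros u hu.
          destruct (proj1 (HU v) hx) as [j [hj hjv]].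
          pose proof (Hdisj _ _ _ hjv hv); subst j.
          apply HU. eauto. }
        apply Htau.
        replace (fun (v : VL) (_ : C i v) => w v) with (c i); [apply Hc|].
        apply functional_extensionality_dep; intro v.
        apply functional_extensionality_dep; intro hv.
        unfold w. destruct (excluded_middle_informative (XL v)) as [hx|hx].
        -- exfalso; exact (Hnx v hv hx).
        -- destruct (excluded_middle_informative (exists i, C i v)) as [he|he].
           ++ destruct (constructive_indefinite_description _ he) as [j hj].
              pose proof (Hdisj _ _ _ hj hv); subst j.
              f_equal. apply proof_irrelevance.
           ++ exfalso; eauto.
Qed.
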